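(* For every integer $d\ge 3$, the theory $\mathrm{PQM}_d$ is complete: it is consistent, and for every $\mathcal L_d$-sentence $\sigma$, either $\mathrm{PQM}_d\models\sigma$ or $\mathrm{PQM}_d\models\neg\sigma$. Equivalently, any two models of $\mathrm{PQM}_d$ satisfy exactly the same $\mathcal L_d$-sentences.
   Context: Notation. For $d\ge 1$, $\mathbb H_d$ is the set of complex linear subspaces of $\mathbb C^d$, ordered by inclusion $\le$, with $\top=\mathbb C^d$, $\bot=\{0\}$, $p^\bot$ the orthogonal complement, $p\wedge q=p\cap q$ and $p\vee q=p+q$. $\mathbb U_d$ is the set of unitary operators on $\mathbb C^d$, and for $U\in\mathbb U_d$, $p\in\mathbb H_d$, $U(p)=\{Uv: v\in p\}$. The Sasaki projection is $p\,\&\,q := q\cap(q^\bot+p)$. Subspaces $p,q$ are compatible iff $p=(p\wedge q)\vee(p\wedge q^\bot)$. Language $\mathcal L_d$: a first-order language without equality and without constants, having a unary function symbol $u_U$ for each $U\in\mathbb U_d$, a unary function symbol $\pi_q$ for each $q\in\mathbb H_d$, and a unary relation symbol $[\,\cdot:p]$ for each $p\in\mathbb H_d$. Theory $\mathrm{PQM}_d$ (over $\mathcal L_d$) has the following axioms, for all $p,q\in\mathbb H_d$ and $U\in\mathbb U_d$: ($\neg\bot$) $\exists x\,\neg[x:\bot]$; ($\top$) $\forall x\,[x:\top]$; ($\le$) if $p\le q$: $\forall x\,([x:p]\to[x:q])$; ($\wedge$) if $p,q$ are compatible: $\forall x\,([x:p]\wedge[x:q]\to[x:p\wedge q])$; ($\pi_i$)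 $\forall x\,([x:p]\to[\pi_q(x):p\,\&\,q])$; ($\pi_c$) if $p\le q$: $\forall x\,([\pi_p(\pi_q(x)):\bot]\to[\pi_p(x):\bot])$; ($\pi_\bot$) $\forall x\,([\pi_q(x):\bot]\to[x:q^\bot])$; ($u_i$) $\forall x\,([x:p]\to[u_U(x):U(p)])$; ($u_e$) $\forall x\,([u_U(x):p]\to[x:U^{-1}(p)])$. *)

(* Defs.v *)
From HB Require Import structures.
From mathcomp Require Import all_boot all_order all_algebra.
From mathcomp Require Import reals.
From mathcomp.real_closed Require Import complex.
Set Implicit Arguments. Unset Strict Implicit. Unset Printing Implicit Defensive.
Import Order.TTheory GRing.Theory Num.Theory.
Local Open Scope ring_scope.

(** Ambient space: column vectors of C^d, where C = R[i] for a real field R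
    (any realType is isomorphic to the reals, so R[i] is the complex field). *)

Section Hilbert.
Variables (R : realType) (d : nat).
Local Notation C := (R[i]).
Local Notation vec := 'cV[C]_d.

Definition adjoint (m n : nat) (A : 'M[C]_(m, n)) : 'M[C]_(n, m) :=
  (map_mx Num.conj A)^T.

(** Standard inner product <u, v> = v^* u (linear in u). *)
Definition dotv (u v : vec) : C := (adjoint v *m u) 0 0.

Definition unitary (U : 'M[C]_d) : bool := U *m adjoint U == 1%:M.

Definition is_subspace (S : vec -> Prop) : Prop :=
  S 0 /\ forall (a : C) (u v : vec), S u -> S v -> S (a *: u + v).

Definition subspace := {S : vec -> Prop | is_subspace S}.
Definition unitaryT := {U : 'M[C]_d | unitary U}.

Definition mem_sub (p : subspace) (v : vec) : Prop := proj1_sig p v.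
Definition mat_of (U : unitaryT) : 'M[C]_d := proj1_sig U.

Lemma bot_sub : is_subspace (fun v => v = 0).
Proof. by split=> // a u v -> ->; rewrite scaler0 addr0. Qed.
Definition sbot : subspace := exist _ _ bot_sub.

Lemma top_sub : is_subspace (fun _ => True).
Proof. by []. Qed.
Definition stop : subspace := exist _ _ top_sub.

Lemma meet_sub (p q : subspace) :
  is_subspace (fun v => mem_sub p v /\ mem_sub q v).
Proof.
case: p q => [P [P0 Pl]] [Q [Q0 Ql]]; rewrite /mem_sub /=.
by split=> // a u v [??] [??]; split; [apply: Pl|apply: Ql].
Qed.
Definition smeet (p q : subspace) : subspace := exist _ _ (meet_sub p q).

Lemma join_sub (p q : subspace) :
  is_subspace (fun w => exists u v, [/\ mem_sub p u, mem_sub q v & w = u + v]).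
Proof.
case: p q => [P [P0 Pl]] [Q [Q0 Ql]]; rewrite /mem_sub /=.
split; first by exists 0, 0; rewrite addr0.
move=> a _ _ [u1 [v1 [Pu1 Qv1 ->]]] [u2 [v2 [Pu2 Qv2 ->]]].
exists (a *: u1 + u2), (a *: v1 + v2); split; [exact: Pl|exact: Ql|].
by rewrite scalerDr addrACA.
Qed.
Definition sjoin (p q : subspace) : subspace := exist _ _ (join_sub p q).

Lemma ortho_sub (p : subspace) :
  is_subspace (fun v => forall w, mem_sub p w -> dotv v w = 0).
Proof.
rewrite /dotv; split=> [w _|a u v Hu Hv w Hw]; first by rewrite mulmx0 mxE.
rewrite mulmxDr -scalemxAr; set A := (_ *m u); set B := (_ *m v).
by rewrite mxE [A]lock mxE -lock [A 0 0]Hu // [B 0 0]Hv // mulr0 addr0.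
Qed.
Definition sortho (p : subspace) : subspace := exist _ _ (ortho_sub p).

Lemma image_sub (M : 'M[C]_d) (p : subspace) :
  is_subspace (fun w => exists2 v, mem_sub p v & w = M *m v).
Proof.
case: p => [P [P0 Pl]]; rewrite /mem_sub /=.
split; first by exists 0; rewrite ?mulmx0.
move=> a _ _ [u Pu ->] [v Pv ->]; exists (a *: u + v); first exact: Pl.
by rewrite mulmxDr scalemxAr.
Qed.
Definition simage (M : 'M[C]_d) (p : subspace) : subspace :=
  exist _ _ (image_sub M p).

Definition sle (p q : subspace) : Prop := forall v, mem_sub p v -> mem_sub q v.
Definition seq_sub (p q : subspace) : Prop := forall v, mem_sub p v <-> mem_sub q v.

Definition sasaki (p q : subspace) : subspace := smeet q (sjoin (sortho q) p).

Definition compatible (p q : subspace) : Prop :=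
  seq_sub p (sjoin (smeet p q) (smeet p (sortho q))).

End Hilbert.

Section Language.
Variables (R : realType) (d : nat).
Local Notation H := (subspace R d).
Local Notation UU := (unitaryT R d).

Inductive term : Type :=
  | TVar : nat -> term
  | Tu : UU -> term -> term
  | Tpi : H -> term -> term.

Inductive formula : Type :=
  | FRel : H -> term -> formula
  | FFalse : formula
  | FNot : formula -> formula
  | FAnd : formula -> formula -> formula
  | FOr : formula -> formula -> formula
  | FImp : formula -> formula -> formula
  | FAll : nat -> formula -> formula
  | FEx : nat -> formula -> formula.

Fixpoint term_var (n : nat) (t : term) : Prop :=
  match t with
  | TVar m => m = n
  | Tu _ t | Tpi _ t => term_var n t
  end.

Fixpoint free_in (n : nat) (f : formula) : Prop :=
  match f with
  | FRel _ t => term_var n t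
  | FFalse => False
  | FNot g => free_in n g
  | FAnd g h | FOr g h | FImp g h => free_in n g \/ free_in n h
  | FAll m g | FEx m g => m <> n /\ free_in n g
  end.

Definition sentence (f : formula) : Prop := forall n, ~ free_in n f.

Record structure := Structure {
  dom :> Type;
  i_u : UU -> dom -> dom;
  i_pi : H -> dom -> dom;
  i_rel : H -> dom -> Prop }.

Section Semantics.
Variable M : structure.

Fixpoint eval (rho : nat -> M) (t : term) : M :=
  match t with
  | TVar n => rho n
  | Tu U t => @i_u M U (eval rho t)
  | Tpi q t => @i_pi M q (eval rho t)
  end.

Definition upd (rho : nat -> M) (n : nat) (a : M) : nat -> M :=
  fun m => if m == n then a else rho m.

Fixpoint sat (rho : nat -> M) (f : formula) : Prop :=
  match f with
  | FRel p t => @i_rel M p (eval rho t)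
  | FFalse => False
  | FNot g => ~ sat rho g
  | FAnd g h => sat rho g /\ sat rho h
  | FOr g h => sat rho g \/ sat rho h
  | FImp g h => sat rho g -> sat rho h
  | FAll n g => forall a : M, sat (upd rho n a) g
  | FEx n g => exists a : M, sat (upd rho n a) g
  end.

Definition models (f : formula) : Prop := forall rho, sat rho f.
End Semantics.

Definition model_of (T : formula -> Prop) (M : structure) : Prop :=
  forall f, T f -> models M f.

Definition entails (T : formula -> Prop) (f : formula) : Prop :=
  forall M : structure, model_of T M -> models M f.

Definition consistent (T : formula -> Prop) : Prop :=
  exists M : structure, model_of T M.

Definition complete_theory (T : formula -> Prop) : Prop :=
  consistent T /\
  forall s, sentence s -> entails T s \/ entails T (FNot s).

Local Notation x := (TVar 0).
Local Notation fa f := (FAll 0 f).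

Inductive PQM : formula -> Prop :=
  | ax_nbot : PQM (FEx 0 (FNot (FRel (sbot R d) x)))
  | ax_top : PQM (fa (FRel (stop R d) x))
  | ax_le (p q : H) : sle p q -> PQM (fa (FImp (FRel p x) (FRel q x)))
  | ax_meet (p q : H) : compatible p q ->
      PQM (fa (FImp (FAnd (FRel p x) (FRel q x)) (FRel (smeet p q) x)))
  | ax_pi_i (p q : H) :
      PQM (fa (FImp (FRel p x) (FRel (sasaki p q) (Tpi q x))))
  | ax_pi_c (p q : H) : sle p q ->
      PQM (fa (FImp (FRel (sbot R d) (Tpi p (Tpi q x)))
                    (FRel (sbot R d) (Tpi p x))))
  | ax_pi_bot (q : H) :
      PQM (fa (FImp (FRel (sbot R d) (Tpi q x)) (FRel (sortho q) x)))
  | ax_u_i (p : H) (U : UU) :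
      PQM (fa (FImp (FRel p x) (FRel (simage (mat_of U) p) (Tu U x))))
  | ax_u_e (p : H) (U : UU) :
      PQM (fa (FImp (FRel p (Tu U x)) (FRel (simage (invmx (mat_of U)) p) x))).

End Language.

(* Main.v *)
Require Import Defs.
From HB Require Import structures.
From mathcomp Require Import all_boot all_order all_algebra.
From mathcomp Require Import reals.
From mathcomp.real_closed Require Import complex.
From mathcomp Require Import ring lra.
From Stdlib Require Import ClassicalEpsilon.
Set Implicit Arguments. Unset Strict Implicit. Unset Printing Implicit Defensive.
Import Order.TTheory GRing.Theory Num.Theory.
Local Open Scope ring_scope.

Section Dot.
Variables (R : realType) (d : nat).
Local Notation C := (R[i]).
Local Notation vec := 'cV[C]_d.
Local Notation dot := (@dotv R d).

Lemma dotE (u v : vec) : dot u v = \sum_i u i 0 * (v i 0)^*.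
Proof.
rewrite /dotv /adjoint !mxE; apply: eq_bigr => i _; rewrite !mxE mulrC //.
Qed.

Lemma dotDl (u v w : vec) : dot (u + v) w = dot u w + dot v w.
Proof. by rewrite !dotE -big_split; apply: eq_bigr => i _; rewrite mxE mulrDl. Qed.

Lemma dotZl (a : C) (u w : vec) : dot (a *: u) w = a * dot u w.
Proof. by rewrite !dotE mulr_sumr; apply: eq_bigr => i _; rewrite mxE mulrA. Qed.

Lemma dotC (u v : vec) : dot v u = (dot u v)^*.
Proof.
rewrite !dotE rmorph_sum; apply: eq_bigr => i _.
by rewrite rmorphM /= conjCK mulrC.
Qed.

Lemma dotDr (u v w : vec) : dot w (u + v) = dot w u + dot w v.
Proof. by rewrite dotC dotDl rmorphD /= -!dotC. Qed.

Lemma dotZr (a : C) (u w : vec) : dot w (a *: u) = a^* * dot w u.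
Proof. by rewrite dotC dotZl rmorphM /= -dotC. Qed.

Lemma dot0l (u : vec) : dot 0 u = 0.
Proof. by rewrite -(scale0r 0) dotZl mul0r. Qed.
Lemma dot0r (u : vec) : dot u 0 = 0.
Proof. by rewrite dotC dot0l conjC0. Qed.
Lemma dotNl (u v : vec) : dot (- u) v = - dot u v.
Proof. by rewrite -scaleN1r dotZl mulN1r. Qed.
Lemma dotNr (u v : vec) : dot v (- u) = - dot v u.
Proof. by rewrite dotC dotNl rmorphN /= -dotC. Qed.
Lemma dotBl (u v w : vec) : dot (u - v) w = dot u w - dot v w.
Proof. by rewrite dotDl dotNl. Qed.
Lemma dotBr (u v w : vec) : dot w (u - v) = dot w u - dot w v.
Proof. by rewrite dotDr dotNr. Qed.

Lemma dot_ge0 (v : vec) : 0 <= dot v v.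
Proof. by rewrite dotE sumr_ge0 // => i _; rewrite mul_conjC_ge0. Qed.

Lemma dot_eq0 (v : vec) : (dot v v == 0) = (v == 0).
Proof.
apply/idP/idP => [|/eqP->]; last by rewrite dot0l.
rewrite dotE psumr_eq0 => [/allP H|i _]; last by rewrite mul_conjC_ge0.
apply/eqP/matrixP => i j; rewrite (ord1 j) mxE.
by have := H i (mem_index_enum _); rewrite mul_conjC_eq0 => /eqP.
Qed.

Lemma dot_real (v : vec) : dot v v \is Num.real.
Proof. by rewrite realE dot_ge0. Qed.

Lemma dot_suml (I : Type) (r : seq I) (F : I -> vec) (w : vec) :
  dot (\sum_(i <- r) F i) w = \sum_(i <- r) dot (F i) w.
Proof.
elim: r => [|x r IH]; first by rewrite !big_nil dot0l.
by rewrite !big_cons dotDl IH.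
Qed.

Lemma dot_sumr (I : Type) (r : seq I) (F : I -> vec) (w : vec) :
  dot w (\sum_(i <- r) F i) = \sum_(i <- r) dot w (F i).
Proof.
elim: r => [|x r IH]; first by rewrite !big_nil dot0r.
by rewrite !big_cons dotDr IH.
Qed.

End Dot.
Section Proj.
Variables (R : realType) (d : nat).
Local Notation C := (R[i]).
Local Notation vec := 'cV[C]_d.
Local Notation dot := (@dotv R d).
Local Notation H := (subspace R d).
Local Notation mem := (@mem_sub R d).

Lemma mem0 (p : H) : mem p 0.
Proof. by case: (proj2_sig p). Qed.
Lemma memDZ (p : H) a u v : mem p u -> mem p v -> mem p (a *: u + v).
Proof. by case: (proj2_sig p) => _ Pl; apply: Pl. Qed.
Lemma memZ (p : H) a u : mem p u -> mem p (a *: u).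
Proof. by move=> pu; rewrite -[_ *: _]addr0; apply: memDZ => //; apply: mem0. Qed.
Lemma memD (p : H) u v : mem p u -> mem p v -> mem p (u + v).
Proof. by move=> pu pv; rewrite -[u]scale1r; apply: memDZ. Qed.
Lemma memN (p : H) u : mem p u -> mem p (- u).
Proof. by move=> pu; rewrite -scaleN1r; apply: memZ. Qed.
Lemma memB (p : H) u v : mem p u -> mem p v -> mem p (u - v).
Proof. by move=> pu pv; apply: memD => //; apply: memN. Qed.
Lemma mem_sum (p : H) (I : Type) (r : seq I) (F : I -> vec) :
  (forall i, mem p (F i)) -> mem p (\sum_(i <- r) F i).
Proof.
move=> HF; elim: r => [|x r IH]; first by rewrite big_nil; apply: mem0.
by rewrite big_cons; apply: memD.
Qed.

Lemma mem_sum_in (p : H) (I : eqType) (r : seq I) (F : I -> vec) :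
  (forall i, i \in r -> mem p (F i)) -> mem p (\sum_(i <- r) F i).
Proof.
elim: r => [|x r IH] HF; first by rewrite big_nil; apply: mem0.
rewrite big_cons; apply: memD; first by apply: HF; rewrite mem_head.
by apply: IH => i ir; apply: HF; rewrite inE ir orbT.
Qed.

Lemma memoP (S : H) v : mem (sortho S) v <-> (forall w, mem S w -> dot v w = 0).
Proof. by []. Qed.

Fixpoint orthl (L : seq vec) : Prop :=
  match L with
  | [::] => True
  | e :: L' => e != 0 /\ (forall f, f \in L' -> dot e f = 0) /\ orthl L'
  end.

Definition projL (L : seq vec) (v : vec) := \sum_(e <- L) (dot v e / dot e e) *: e.

Lemma projL_orth0 (L : seq vec) v e :
  (forall f, f \in L -> dot f e = 0) -> dot (projL L v) e = 0.
Proof.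
move=> H0; rewrite /projL dot_suml big1_seq // => f /andP[_ fL].
by rewrite dotZl H0 // mulr0.
Qed.

Lemma projL_dot (L : seq vec) v f : orthl L -> f \in L -> dot (projL L v) f = dot v f.
Proof.
elim: L => [//|e L IH] /= [e0 [eL oL]]; rewrite inE => /orP [/eqP->|fL].
  rewrite /projL big_cons dotDl dotZl mulfVK ?dot_eq0 //.
  rewrite (@projL_orth0 L v e) ?addr0 // => g gL.
  by rewrite dotC eL // conjC0.
rewrite /projL big_cons dotDl dotZl (eL f fL) mulr0 add0r.
exact: IH.
Qed.

Lemma orthl_nth (L : seq vec) i : orthl L -> (i < size L)%N -> nth 0 L i != 0.
Proof.
elim: L i => [//|e L IH] [|i] /= [e0 [eL oL]] //.
by rewrite ltnS; apply: IH.
Qed.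

Lemma orthl_nth2 (L : seq vec) i j : orthl L -> (i < size L)%N -> (j < size L)%N ->
  i != j -> dot (nth 0 L i) (nth 0 L j) = 0.
Proof.
elim: L i j => [//|e L IH] [|i] [|j] /= [e0 [eL oL]] //; rewrite ?ltnS.
- by move=> _ jL _; apply: eL; rewrite mem_nth.
- by move=> iL _ _; rewrite dotC eL ?conjC0 // mem_nth.
- by move=> iL jL ij; apply: IH.
Qed.

Lemma orthl_size (L : seq vec) : orthl L -> (size L <= d)%N.
Proof.
move=> oL.
pose A : 'M[C]_(size L, d) := \matrix_(j, i) (nth 0 L j) i 0.
pose B : 'M[C]_(d, size L) :=
  \matrix_(i, j) (((nth 0 L j) i 0)^* / dot (nth 0 L j) (nth 0 L j)).
have AB : A *m B = 1%:M.
  apply/matrixP => j k; rewrite !mxE.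
  under eq_bigr do rewrite !mxE mulrA.
  rewrite -mulr_suml -dotE.
  case: (eqVneq j k) => [->|jk].
    by rewrite mulfV // dot_eq0 orthl_nth.
  rewrite orthl_nth2 // ?mul0r //.
by have := rank_leq_col A; rewrite (eqP (_ : row_free A)) //; apply/row_freeP; exists B.
Qed.

Lemma basis_ex (S : H) : exists L, [/\ orthl L, (forall e, e \in L -> mem S e) &
  (forall v, mem S v -> projL L v = v)].
Proof.
apply: NNPP => nex.
have step : forall L, orthl L -> (forall e, e \in L -> mem S e) ->
    exists v, mem S v /\ projL L v <> v.
  move=> L oL SL; apply: NNPP => nv; apply: nex; exists L; split => // v Sv.
  by apply: NNPP => nv'; apply: nv; exists v.
have big : forall n, exists L, [/\ orthl L, (forall e, e \in L -> mem S e) & size L = n].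
  elim=> [|n [L [oL SL sL]]]; first by exists [::].
  have [v [Sv nv]] := step L oL SL.
  exists ((v - projL L v) :: L); split => /=; last by rewrite sL.
  - split; first by rewrite subr_eq0 eq_sym; apply/eqP.
    split=> // f fL; rewrite dotBl projL_dot // subrr //.
  - move=> e; rewrite inE => /orP [/eqP->|]; last exact: SL.
    apply: memB => //; apply: mem_sum_in => e' e'L; apply: memZ; exact: SL.
have [L [oL _ sL]] := big d.+1.
by have := orthl_size oL; rewrite sL ltnn.
Qed.

Definition basis (S : H) : seq vec := proj1_sig (constructive_indefinite_description _ (basis_ex S)).

Lemma basisP (S : H) : [/\ orthl (basis S), (forall e, e \in basis S -> mem S e) &
  (forall v, mem S v -> projL (basis S) v = v)].
Proof. exact: (proj2_sig (constructive_indefinite_description _ (basis_ex S))). Qed.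

Definition proj (S : H) (v : vec) : vec := projL (basis S) v.

Lemma proj_mem (S : H) v : mem S (proj S v).
Proof.
case: (basisP S) => _ SL _; apply: mem_sum_in => e eL; apply: memZ; exact: SL.
Qed.

Lemma proj_orth (S : H) v : mem (sortho S) (v - proj S v).
Proof.
case: (basisP S) => oL SL Sid; apply/memoP => w Sw.
rewrite -(Sid w Sw) /projL dot_sumr big1_seq // => e /andP[_ eL].
by rewrite dotZr dotBl projL_dot // subrr mulr0.
Qed.

Lemma ortho_meet0 (S : H) v : mem S v -> mem (sortho S) v -> v = 0.
Proof. by move=> Sv /memoP /(_ v Sv) /eqP; rewrite dot_eq0 => /eqP. Qed.

Lemma proj_unique (S : H) v a : mem S a -> mem (sortho S) (v - a) -> proj S v = a.
Proof.
move=> Sa oa; apply/eqP; rewrite -subr_eq0; apply/eqP; apply: (@ortho_meet0 S).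
  by apply: memB => //; apply: proj_mem.
have -> : proj S v - a = (v - a) - (v - proj S v) by rewrite [RHS]addrC opprB addrA subrK.
by apply: memB => //; apply: proj_orth.
Qed.

Lemma proj_id (S : H) v : mem S v -> proj S v = v.
Proof. by move=> Sv; apply: proj_unique => //; rewrite subrr; apply: mem0. Qed.

Lemma proj_ortho0 (S : H) v : mem (sortho S) v -> proj S v = 0.
Proof. by move=> ov; apply: proj_unique; [apply: mem0|rewrite subr0]. Qed.

Lemma projDZ (S : H) a u v : proj S (a *: u + v) = a *: proj S u + proj S v.
Proof.
apply: proj_unique; first by apply: memDZ; apply: proj_mem.
have -> : a *: u + v - (a *: proj S u + proj S v) =
   a *: (u - proj S u) + (v - proj S v) by rewrite scalerBr addrACA opprD.
by apply: memDZ; apply: proj_orth.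
Qed.

Lemma projZ (S : H) a u : proj S (a *: u) = a *: proj S u.
Proof.
by have := projDZ S a u 0; rewrite addr0 (proj_id (mem0 S)) addr0.
Qed.
Lemma projD (S : H) u v : proj S (u + v) = proj S u + proj S v.
Proof. by have := projDZ S 1 u v; rewrite !scale1r. Qed.

Lemma orthoK (S : H) v : mem (sortho (sortho S)) v <-> mem S v.
Proof.
split=> [oov|Sv]; last by apply/memoP => w /memoP ow; rewrite dotC ow // conjC0.
have -> : v = proj S v + (v - proj S v) by rewrite addrC subrK.
suff -> : v - proj S v = 0 by rewrite addr0; apply: proj_mem.
apply: (@ortho_meet0 (sortho S)); first by apply: proj_orth.
apply: memB => //; apply/memoP => w /memoP ow.
by rewrite dotC ow ?conjC0 //; apply: proj_mem.
Qed.

Lemma dot_proj (S : H) u v : dot (proj S u) v = dot (proj S u) (proj S v).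
Proof.
rewrite [in LHS](_ : v = proj S v + (v - proj S v)); last by rewrite addrC subrK.
rewrite dotDr [dot _ (v - _)]dotC (@proj_orth S v) ?conjC0 ?addr0 //.
exact: proj_mem.
Qed.

End Proj.
Section Sub.
Variables (R : realType) (d : nat).
Local Notation C := (R[i]).
Local Notation vec := 'cV[C]_d.
Local Notation dot := (@dotv R d).
Local Notation H := (subspace R d).
Local Notation mem := (@mem_sub R d).
Local Notation RC := (real_complex R).

Lemma RC_real (r : R) : RC r \is Num.real.
Proof. by rewrite complex_real. Qed.
Lemma conj_RC (r : R) : (RC r)^* = RC r.
Proof. by rewrite conj_Creal // RC_real. Qed.
Lemma RC_inj : injective RC.
Proof. exact: complexI. Qed.
Lemma RC_le (x y : R) : (RC x <= RC y) = (x <= y).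
Proof. exact: lecR. Qed.
Lemma RC_lt (x y : R) : (RC x < RC y) = (x < y).
Proof. exact: ltcR. Qed.
Lemma real_RC (z : C) : z \is Num.real -> exists r, z = RC r.
Proof. by move=> zr; exists (complex.Re z); rewrite RRe_real. Qed.
Lemma dot_RC (v : vec) : exists r, dot v v = RC r /\ 0 <= r.
Proof.
have [r rE] := real_RC (dot_real v); exists r; split => //.
by rewrite -RC_le -rE rmorph0 dot_ge0.
Qed.
Lemma conj_dotvv (v : vec) : (dot v v)^* = dot v v.
Proof. by rewrite conj_Creal // dot_real. Qed.

Lemma span1_sub (v : vec) : is_subspace (fun w => exists c : C, w = c *: v).
Proof.
split; first by exists 0; rewrite scale0r.
move=> a _ _ [c1 ->] [c2 ->]; exists (a * c1 + c2).
by rewrite scalerDl scalerA.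
Qed.
Definition span1 (v : vec) : H := exist _ _ (span1_sub v).

Lemma hyp_sub (v : vec) : is_subspace (fun w => dot w v = 0).
Proof.
split; first by rewrite dot0l.
by move=> a u w hu hw; rewrite dotDl dotZl hu hw mulr0 addr0.
Qed.
Definition hyp (v : vec) : H := exist _ _ (hyp_sub v).

Lemma span2_sub (x y : vec) : is_subspace (fun w => exists a b : C, w = a *: x + b *: y).
Proof.
split; first by exists 0, 0; rewrite !scale0r addr0.
move=> c _ _ [a1 [b1 ->]] [a2 [b2 ->]]; exists (c * a1 + a2), (c * b1 + b2).
rewrite scalerDr !scalerDl !scalerA.
by rewrite addrACA.
Qed.
Definition span2 (x y : vec) : H := exist _ _ (span2_sub x y).

Lemma hypL_sub (L : seq vec) : is_subspace (fun w => forall e, e \in L -> dot w e = 0).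
Proof.
split=> [e _|a u w hu hw e eL]; first by rewrite dot0l.
by rewrite dotDl dotZl hu // hw // mulr0 addr0.
Qed.
Definition hypL (L : seq vec) : H := exist _ _ (hypL_sub L).

Lemma sle_refl (p : H) : sle p p. Proof. by []. Qed.
Lemma sle_trans (p q r : H) : sle p q -> sle q r -> sle p r.
Proof. by move=> pq qr v /pq /qr. Qed.

Lemma sasakiP (p q : H) w :
  mem (sasaki p q) w <-> exists v, mem p v /\ w = proj q v.
Proof.
split.
  case=> qw [u [v [ou pv wE]]]; exists v; split => //.
  by rewrite -(proj_id qw) wE projD (proj_ortho0 ou) add0r.
move=> [v [pv ->]]; split; first exact: proj_mem.
exists (- (v - proj q v)), v; split => //; last by rewrite opprB subrK.
by apply: memN; apply: proj_orth.
Qed.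

Lemma sasaki_mono (p p' q : H) : sle p p' -> sle (sasaki p q) (sasaki p' q).
Proof. by move=> pp' w /sasakiP [v [pv ->]]; apply/sasakiP; exists v; split => //; apply: pp'. Qed.

Lemma sasaki_le (p q : H) : sle (sasaki p q) q.
Proof. by move=> w []. Qed.

Lemma compat_orth (p q : H) : sle p (sortho q) -> compatible p q.
Proof.
move=> pq v; split.
  move=> pv; exists 0, v; split; last by rewrite add0r.
  - by split; apply: mem0.
  - by split => //; exact: pq.
move=> [u [w [[pu _] [pw _] ->]]]; exact: memD.
Qed.

Lemma meet_orth (p q : H) : sle p (sortho q) -> sle (smeet p q) (sbot R d).
Proof.
move=> pq v [pv qv]; rewrite /mem_sub /=.
by apply: (@ortho_meet0 _ _ q) => //; apply: pq.
Qed.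

Lemma compat_hyp (L : seq vec) (e : vec) : (forall f, f \in L -> dot e f = 0) ->
  compatible (hypL L) (hyp e).
Proof.
move=> eL v; split; last by move=> [u [w [[pu _] [pw _] ->]]]; exact: memD.
move=> hv; set c := dot v e / dot e e.
exists (v - c *: e), (c *: e); split; last by rewrite subrK.
- split.
    apply: memB => //; apply: memZ => f fL; exact: eL.
  rewrite /mem_sub /= dotBl dotZl.
  case: (eqVneq e 0) => [->|e0]; first by rewrite !dot0r mulr0 subr0.
  by rewrite /c mulfVK ?subrr // dot_eq0.
- split; first by apply: memZ => f fL; exact: eL.
  apply/memoP => w hw; rewrite dotZl.
  by rewrite dotC hw conjC0 mulr0.
Qed.

Lemma hypL_cons (L : seq vec) e : Defs.seq_sub (smeet (hypL L) (hyp e)) (hypL (e :: L)).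
Proof.
move=> v; split.
  by move=> [hL he] f; rewrite inE => /orP [/eqP->|fL] //; apply: hL.
by move=> h; split => [f fL|]; apply: h; rewrite inE ?fL ?orbT ?eqxx.
Qed.

Lemma ortho_hyp (r : vec) : sle (sortho (hyp r)) (span1 r).
Proof.
move=> v /memoP ov; exists (dot v r / dot r r).
set w := v - (dot v r / dot r r) *: r.
have hw : dot w r = 0.
  rewrite /w dotBl dotZl.
  case: (eqVneq r 0) => [->|r0]; first by rewrite !dot0r mulr0 subr0.
  by rewrite mulfVK ?subrr // dot_eq0.
suff : w = 0 by move/eqP; rewrite subr_eq0 => /eqP.
apply/eqP; rewrite -dot_eq0; rewrite {1}/w dotBl ov // dotZl.
by rewrite [dot r w]dotC hw conjC0 mulr0 subrr.
Qed.

Lemma span1_le_hyp (u v : vec) : dot u v = 0 -> sle (span1 u) (hyp v).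
Proof. by move=> uv w [c ->]; rewrite /mem_sub /= dotZl uv mulr0. Qed.

Lemma span1_orth (u v : vec) : dot u v = 0 -> sle (span1 u) (sortho (span1 v)).
Proof.
move=> uv w [c ->]; apply/memoP => w' [c' ->].
by rewrite dotZl dotZr uv !mulr0.
Qed.

Lemma orth2_ex (a b : vec) : (3 <= d)%N -> exists w, w != 0 /\ dot w a = 0 /\ dot w b = 0.
Proof.
move=> d3.
pose A : 'M[C]_(d, 2) := \matrix_(i, j) (if j == 0 then (a i 0)^* else (b i 0)^*).
have nf : ~~ row_free A.
  rewrite -row_leq_rank; apply/negP => H.
  by have := leq_trans H (rank_leq_col A); rewrite leqNgt (leq_trans _ d3).
rewrite -kermx_eq0 in nf.
have [i ri] : exists i, row i (kermx A) != 0.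
  apply: NNPP => nr; move/negP: nf; apply; apply/eqP/row_matrixP => i.
  rewrite row0; apply/eqP; case: eqP => // /eqP h; case: nr; by exists i.
have kA : row i (kermx A) *m A = 0 by rewrite -row_mul mulmx_ker row0.
exists (row i (kermx A))^T; split; first by rewrite trmx_eq0.
split.
  have := congr1 (fun M : 'M_(1, 2) => M 0 0) kA; rewrite !mxE => <-.
  rewrite dotE; apply: eq_bigr => k _; rewrite !mxE //.
have := congr1 (fun M : 'M_(1, 2) => M 0 1) kA; rewrite !mxE => <-.
rewrite dotE; apply: eq_bigr => k _; rewrite !mxE //.
Qed.

End Sub.
Section Model.
Variables (R : realType) (d : nat) (M : structure R d).
Hypothesis HM : model_of (@PQM R d) M.
Local Notation C := (R[i]).
Local Notation vec := 'cV[C]_d.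
Local Notation dot := (@dotv R d).
Local Notation H := (subspace R d).
Local Notation mem := (@mem_sub R d).
Local Notation RC := (real_complex R).
Local Notation rel := (@i_rel R d M).
Local Notation pi := (@i_pi R d M).
Local Notation uu := (@i_u R d M).
Local Notation bot := (sbot R d).

Lemma Atop (a : M) : rel (stop R d) a.
Proof. exact: (HM (ax_top R d) (fun _ => a) a). Qed.
Lemma Ale (p q : H) (a : M) : sle p q -> rel p a -> rel q a.
Proof. by move=> pq; apply: (HM (ax_le pq) (fun _ => a) a). Qed.
Lemma Ameet (p q : H) (a : M) : compatible p q -> rel p a -> rel q a -> rel (smeet p q) a.
Proof. by move=> pq pa qa; apply: (HM (ax_meet pq) (fun _ => a) a). Qed.
Lemma Api (p q : H) (a : M) : rel p a -> rel (sasaki p q) (pi q a).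
Proof. by apply: (HM (ax_pi_i p q) (fun _ => a) a). Qed.
Lemma Apic (p q : H) (a : M) : sle p q -> rel bot (pi p (pi q a)) -> rel bot (pi p a).
Proof. by move=> pq; apply: (HM (ax_pi_c pq) (fun _ => a) a). Qed.
Lemma Apibot (q : H) (a : M) : rel bot (pi q a) -> rel (sortho q) a.
Proof. by apply: (HM (ax_pi_bot q) (fun _ => a) a). Qed.
Lemma Aui (p : H) U (a : M) : rel p a -> rel (simage (mat_of U) p) (uu U a).
Proof. by apply: (HM (ax_u_i p U) (fun _ => a) a). Qed.
Lemma Aue (p : H) U (a : M) : rel p (uu U a) -> rel (simage (invmx (mat_of U)) p) a.
Proof. by apply: (HM (ax_u_e p U) (fun _ => a) a). Qed.
Lemma Anbot (a0 : M) : exists a, ~ rel bot a.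
Proof. exact: (HM (ax_nbot R d) (fun _ => a0)). Qed.

Lemma Ale_bot (p : H) (a : M) : rel bot a -> rel p a.
Proof. by apply: Ale => v; rewrite /mem_sub /= => ->; apply: mem0. Qed.

Lemma orth_bot (a b : vec) (c : M) : dot a b = 0 ->
  rel (span1 a) c -> rel (span1 b) c -> rel bot c.
Proof.
move=> ab ra rb; have o := span1_orth ab.
apply: Ale (meet_orth o) _; apply: Ameet => //; exact: compat_orth.
Qed.

Lemma Trule (a b r : vec) (c : M) : r != 0 -> dot a b * dot r r = dot a r * dot r b ->
  rel (span1 a) c -> rel (span1 b) c -> rel (span1 r) c.
Proof.
move=> r0 cond ra rb.
set N := dot r r.
have N0 : N != 0 by rewrite dot_eq0.
pose P v := v - (dot v r / N) *: r.
have projP : forall v, proj (hyp r) v = P v.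
  move=> v; apply: proj_unique.
    by rewrite /mem_sub /= /P dotBl dotZl mulfVK // subrr.
  apply/memoP => w hw; rewrite /P opprB addrC subrK dotZl.
  by rewrite [dot r w]dotC hw conjC0 mulr0.
have sP : forall v, sle (sasaki (span1 v) (hyp r)) (span1 (P v)).
  move=> v w /sasakiP [_ [[k ->] ->]]; exists k.
  by rewrite projZ projP.
have dP : dot (P a) (P b) = 0.
  rewrite /P !dotBl !dotBr !dotZl !dotZr.
  rewrite rmorphM /= fmorphV /= conj_dotvv -/N.
  have -> : (dot b r)^* = dot r b by rewrite -dotC.
  move: cond; rewrite [dot r b]dotC => cond.
  apply/eqP; rewrite -(can_eq (mulfK N0)) mul0r; apply/eqP.
  move: cond; rewrite -/N; move: (dot b r)^* (dot a r) (dot a b) => X Y Z cond.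
  have -> : (Z - X / N * Y - (Y / N * X - Y / N * (X / N * N))) * N = Z * N - Y * X.
    by field.
  by rewrite cond subrr.
have rb' := Ale (sP b) (Api (hyp r) rb).
have ra' := Ale (sP a) (Api (hyp r) ra).
have := Apibot (orth_bot dP ra' rb').
by apply: Ale; apply: ortho_hyp.
Qed.

End Model.
Section Iter.
Variables (R : realType) (d : nat) (M : structure R d).
Hypothesis HM : model_of (@PQM R d) M.
Hypothesis d3 : (3 <= d)%N.
Local Notation C := (R[i]).
Local Notation vec := 'cV[C]_d.
Local Notation dot := (@dotv R d).
Local Notation H := (subspace R d).
Local Notation mem := (@mem_sub R d).
Local Notation RC := (real_complex R).
Local Notation rel := (@i_rel R d M).
Local Notation pi := (@i_pi R d M).
Local Notation uu := (@i_u R d M).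
Local Notation bot := (sbot R d).

Lemma dot3 (a B w : vec) x1 y1 z1 x2 y2 z2 : dot a B = 0 -> dot a w = 0 -> dot B w = 0 ->
  dot (x1 *: a + y1 *: B + z1 *: w) (x2 *: a + y2 *: B + z2 *: w) =
  x1 * x2^* * dot a a + y1 * y2^* * dot B B + z1 * z2^* * dot w w.
Proof.
move=> aB aw Bw.
have Ba : dot B a = 0 by rewrite dotC aB conjC0.
have wa : dot w a = 0 by rewrite dotC aw conjC0.
have wB : dot w B = 0 by rewrite dotC Bw conjC0.
rewrite !dotDl !dotDr !dotZl !dotZr aB aw Bw Ba wa wB.
rewrite !mulr0 !addr0 !add0r.
by rewrite !mulrA.
Qed.

Lemma RCsqrt (u : R) : 0 <= u -> RC (Num.sqrt u) * RC (Num.sqrt u) = RC u.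
Proof. by move=> u0; rewrite -rmorphM -expr2 sqr_sqrtr. Qed.

Lemma RC_neq0 (u : R) : 0 < u -> RC u != 0.
Proof. by move=> u0; rewrite -(rmorph0 RC) (inj_eq (@RC_inj R)) gt_eqF. Qed.

Lemma constr (a b : vec) (na nb g y : R) (c : M) :
  dot a a = RC na -> dot b b = RC nb -> dot a b * (dot a b)^* = RC g ->
  0 < na -> 0 < nb - g / na -> 0 <= g -> 0 <= y ->
  rel (span1 a) c -> rel (span1 b) c ->
  exists rp rm, [/\ rel (span1 rp) c, rel (span1 rm) c,
     dot rp rp = RC (g * (nb - g / na + y) ^+ 2 / (na * (nb - g / na) ^+ 2) + (nb - g / na + y)),
     dot rm rm = RC (g * (nb - g / na + y) ^+ 2 / (na * (nb - g / na) ^+ 2) + (nb - g / na + y)) &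
     dot rp rm = RC (g * (nb - g / na + y) ^+ 2 / (na * (nb - g / na) ^+ 2) + 2 * (nb - g / na) - (nb - g / na + y))].
Proof.
move=> Ea Eb Eg na0 k0 g0 y0 ra rb.
set k := nb - g / na in k0 *.
set Y := k + y.
set G := dot a b.
have Y0 : 0 < Y by rewrite /Y; lra.
set B := b - (G^* / RC na) *: a.
have Ba : dot B a = 0.
  by rewrite /B dotBl dotZl -dotC Ea mulfVK ?subrr // RC_neq0.
have aB : dot a B = 0 by rewrite dotC Ba conjC0.
have EK : dot B B = RC k.
  rewrite {1}/B dotBl dotZl aB mulr0 subr0 /B dotBr dotZr Eb.
  rewrite rmorphM /= conjCK fmorphV /= conj_RC [dot b a]dotC -/G.
  rewrite /k rmorphB /= fmorph_div /= -Eg.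
  by rewrite mulrAC.
have YE : Y = k + y by [].
clearbody Y; clearbody k.
have [w [w0 [wa wb]]] := orth2_ex a b d3.
have aw : dot a w = 0 by rewrite dotC wa conjC0.
have Bw : dot B w = 0.
  by rewrite /B dotBl dotZl aw mulr0 subr0 dotC wb conjC0.
have [wn [Ew wn0]] := dot_RC w.
have wnp : 0 < wn.
  rewrite lt_def wn0 andbT; apply/eqP => wn00; move: w0; rewrite -dot_eq0 Ew wn00.
  by rewrite rmorph0 eqxx.
set z := Num.sqrt (y / wn).
have Ez : RC z * RC z * RC wn = RC y.
  rewrite (RCsqrt (divr_ge0 y0 (ltW wnp))) -rmorphM mulfVK //.
  by rewrite gt_eqF.
set t := Y / (na * k).
have Et : RC t * RC na * RC k = RC k + RC y.
  rewrite -!rmorphM -rmorphD /t; congr (RC _).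
  rewrite YE; field; by rewrite !gt_eqF.
set x := G^* * RC t.
have xc : x^* = G * RC t by rewrite /x rmorphM /= conjCK conj_RC.
have ea : a = 1 *: a + 0 *: B + 0 *: w by rewrite !scale0r !addr0 scale1r.
have eb : b = (G^* / RC na) *: a + 1 *: B + 0 *: w.
  by rewrite scale0r addr0 scale1r /B addrC subrK.
have tE : RC t = RC Y / (RC na * RC k) by rewrite /t fmorph_div rmorphM.
clearbody t.
have na1 := RC_neq0 na0.
have k1 := RC_neq0 k0.
have gen : forall s : R, s * s = z * z ->
  let r := x *: a + 1 *: B + RC s *: w in
  rel (span1 r) c /\ dot r r = RC (g * Y ^+ 2 / (na * k ^+ 2) + Y).
  move=> s ss r.
  have Ess : RC s * RC s * RC wn = RC y by rewrite -rmorphM ss rmorphM Ez.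
  have Err : dot r r = RC (g * Y ^+ 2 / (na * k ^+ 2) + Y).
    rewrite /r dot3 // Ea EK Ew xc conj_RC conjC1 Ess mulr1 mul1r /x.
    rewrite tE !(rmorphD, rmorphN, rmorphB, rmorphM, fmorphV, rmorphXn) /= -Eg -/G.
    rewrite YE !rmorphD /=; field.
    by rewrite na1 k1.
  split=> //.
  apply: (Trule HM _ _ ra rb).
    rewrite -dot_eq0 Err -(rmorph0 RC) (inj_eq (@RC_inj R)) gt_eqF //.
    have : 0 <= g * Y ^+ 2 / (na * k ^+ 2).
      apply: divr_ge0; first by apply: mulr_ge0 => //; exact: sqr_ge0.
      by apply: mulr_ge0; [exact: ltW | exact: sqr_ge0].
    move: Y0; clear; lra.
  have Ear : dot a r = x^* * RC na.
    by rewrite {1}ea /r dot3 // Ea mul1r !mul0r !addr0.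
  have Erb : dot r b = x * (G / RC na) * RC na + RC k.
    rewrite eb /r dot3 // Ea EK rmorphM /= fmorphV /= conjCK conj_RC conjC1 conjC0.
    by rewrite mulr1 mul1r mulr0 mul0r addr0.
  rewrite Err Ear Erb xc /x -/G.
  rewrite tE !(rmorphD, rmorphN, rmorphB, rmorphM, fmorphV, rmorphXn) /= -Eg -/G.
  rewrite YE !rmorphD /=; field.
  by rewrite na1 k1.
have [rp1 rp2] := gen z erefl.
have [rm1 rm2] := gen (- z) (mulrNN z z).
exists (x *: a + 1 *: B + RC z *: w), (x *: a + 1 *: B + RC (- z) *: w); split => //.
rewrite dot3 // Ea EK Ew xc conj_RC conjC1 mulr1 mul1r rmorphN /= mulrN mulNr Ez.
rewrite /x tE !(rmorphD, rmorphN, rmorphB, rmorphM, fmorphV, rmorphXn) /= -Eg -/G.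
rewrite YE !rmorphD /=; field.
by rewrite na1 k1.
Qed.


Lemma G0_bot (a b : vec) (c : M) (g : R) : dot a b * (dot a b)^* = RC g -> g = 0 ->
  rel (span1 a) c -> rel (span1 b) c -> rel bot c.
Proof.
move=> Eg g0; apply: (orth_bot HM); apply/eqP; rewrite -mul_conjC_eq0 Eg g0.
by rewrite rmorph0.
Qed.

Lemma terminal (a b : vec) (na nb g : R) (c : M) :
  dot a a = RC na -> dot b b = RC nb -> dot a b * (dot a b)^* = RC g ->
  0 < na -> 0 < nb - g / na -> 0 < g -> 8 * g <= na * nb - g ->
  rel (span1 a) c -> rel (span1 b) c -> rel bot c.
Proof.
move=> Ea Eb Eg na0 k0 g0 h8 ra rb.
set k := nb - g / na in k0.
have nk : na * k = na * nb - g by rewrite /k mulrBr mulrCA mulfV ?mulr1 // gt_eqF.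
set kk := g / (na * k ^+ 2).
have kk0 : 0 < kk by rewrite /kk divr_gt0 // mulr_gt0 // exprn_gt0.
have h8' : 8 * kk * k <= 1.
  have -> : 8 * kk * k = 8 * g / (na * k) by rewrite /kk; field; rewrite !gt_eqF.
  rewrite ler_pdivrMr ?mul1r ?nk //.
  move: h8 g0; clear; lra.
set s := Num.sqrt (1 - 8 * kk * k).
have s0 : 0 <= s by apply: sqrtr_ge0.
have ss : s ^+ 2 = 1 - 8 * kk * k by rewrite sqr_sqrtr // subr_ge0.
set Y := (1 + s) / (2 * kk).
have y0 : 0 <= Y - k.
  have k2 : 0 < 2 * kk by apply: mulr_gt0.
  rewrite subr_ge0 /Y ler_pdivlMr //.
  move: h8' s0; clear -kk0 k0; nra.
have := constr Ea Eb Eg na0 k0 (ltW g0) y0 ra rb.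
rewrite (_ : nb - g / na = k) // (_ : k + (Y - k) = Y); last by rewrite addrC subrK.
move=> [rp [rm [rrp rrm _ _ Epm]]].
apply: (orth_bot HM) rrp rrm; rewrite Epm -(rmorph0 RC); congr (RC _).
have -> : g * Y ^+ 2 / (na * k ^+ 2) = kk * Y ^+ 2 by rewrite /kk; field; rewrite !gt_eqF.
have -> : kk * Y ^+ 2 + 2 * k - Y = (s ^+ 2 - (1 - 8 * kk * k)) / (4 * kk).
  by rewrite /Y; field; rewrite gt_eqF.
by rewrite ss subrr mul0r.
Qed.


Lemma iterate (r0 : R) (r00 : 0 < r0) (n : nat) : forall (a b : vec) (na nb g : R) (c : M),
  dot a a = RC na -> dot b b = RC nb -> dot a b * (dot a b)^* = RC g ->
  0 < na -> 0 < nb - g / na -> 0 <= g ->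
  rel (span1 a) c -> rel (span1 b) c ->
  (g = 0 \/ (0 < g /\ r0 <= (na * nb - g) / g /\ 8 <= (na * nb - g) / g + n%:R * (r0 ^+ 2 / 4))) ->
  rel bot c.
Proof.
elim: n => [|n IH] a b na nb g c Ea Eb Eg na0 k0 g0 ra rb [g00|[gp [h1 h2]]];
  try exact: (G0_bot Eg g00 ra rb).
  apply: (terminal Ea Eb Eg) => //.
  by move: h2; rewrite mul0r addr0 ler_pdivlMr // mulrC.
case: (lerP 8 ((na * nb - g) / g)) => h8.
  by apply: (terminal Ea Eb Eg) => //; move: h8; rewrite ler_pdivlMr // mulrC.
have := constr Ea Eb Eg na0 k0 g0 (ltW k0) ra rb.
set k := nb - g / na in k0 *.
set na' := g * (k + k) ^+ 2 / (na * k ^+ 2) + (k + k).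
set o := g * (k + k) ^+ 2 / (na * k ^+ 2) + 2 * k - (k + k).
move=> [rp [rm [rrp rrm Ep Em Epm]]].
have eo : o = 4 * g / na by rewrite /o; field; rewrite !gt_eqF.
have ena : na' = 4 * g / na + 2 * k by rewrite /na'; field; rewrite !gt_eqF.
have o0 : 0 < o by rewrite eo divr_gt0 // mulr_gt0.
have ona : na' = o + 2 * k by rewrite ena eo.
have na'0 : 0 < na' by rewrite ona; move: o0 k0; clear; lra.
set rho := (na * nb - g) / g.
have erho : rho = na * k / g by rewrite /rho /k; field; rewrite !gt_eqF.
have rho' : (na' * na' - o ^+ 2) / o ^+ 2 = rho + rho ^+ 2 / 4.
  rewrite erho ena eo; field; rewrite !gt_eqF //.
apply: (IH rp rm na' na' (o ^+ 2) c) => //.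
- by rewrite Epm rmorphXn conj_RC expr2.
- rewrite subr_gt0 ltr_pdivrMr // ona; move: o0 k0; clear; nra.
- exact: sqr_ge0.
right; split; first by rewrite exprn_gt0.
rewrite rho'.
have rr : r0 ^+ 2 <= rho ^+ 2 by rewrite ler_pXn2r // ?nnegrE ltW // (lt_le_trans r00 h1).
have rr' : 0 <= rho ^+ 2 by apply: sqr_ge0.
move: h1 h2 rr rr'; rewrite -/rho -[n.+1]addn1 natrD /=; clear; lra.
Qed.

Lemma KE (a b : vec) (na nb g : R) :
  dot a a = RC na -> dot b b = RC nb -> dot a b * (dot a b)^* = RC g -> 0 < na ->
  let B := b - (dot b a / dot a a) *: a in dot B B = RC (nb - g / na).
Proof.
move=> Ea Eb Eg na0 B.
have aB : dot a B = 0.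
  rewrite dotC /B dotBl dotZl mulfVK ?subrr ?conjC0 // dot_eq0.
  by rewrite -dot_eq0 Ea RC_neq0.
rewrite {1}/B dotBl dotZl aB mulr0 subr0 /B dotBr dotZr Eb Ea.
rewrite rmorphM /= fmorphV /= conj_RC -dotC.
rewrite rmorphB /= fmorph_div /= -Eg [dot b a]dotC.
by rewrite mulrAC.
Qed.

Lemma R2 (a b : vec) (c : M) : a != 0 -> b - (dot b a / dot a a) *: a != 0 ->
  rel (span1 a) c -> rel (span1 b) c -> rel bot c.
Proof.
move=> a0 B0 ra rb.
have [na [Ea na00]] := dot_RC a.
have [nb [Eb _]] := dot_RC b.
have [g Eg] : exists g, dot a b * (dot a b)^* = RC g.
  by apply: real_RC; rewrite realE mul_conjC_ge0.
have g0 : 0 <= g by rewrite -RC_le -Eg rmorph0 mul_conjC_ge0.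
have na0 : 0 < na.
  rewrite lt_def na00 andbT; apply/eqP => e; move: a0; rewrite -dot_eq0 Ea e rmorph0 eqxx //.
have k0 : 0 < nb - g / na.
  have := KE Ea Eb Eg na0; move: B0; set B := b - _ => B0 EB.
  have [//|] := ltP 0 (nb - g / na) => h.
  have : 0 <= nb - g / na by rewrite -RC_le -EB rmorph0 dot_ge0.
  move=> h'; have e : nb - g / na = 0 by apply/eqP; rewrite eq_le h h'.
  by move: B0; rewrite -dot_eq0 EB e rmorph0 eqxx.
have [g00|gp] := eqVneq g 0.
  exact: (G0_bot Eg g00 ra rb).
have gp' : 0 < g by rewrite lt_def gp g0.
set r0 := (na * nb - g) / g.
have r00 : 0 < r0.
  rewrite /r0 divr_gt0 // subr_gt0.
  by move: k0; rewrite subr_gt0 ltr_pdivrMr // mulrC.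
have q0 : 0 <= 32 / r0 ^+ 2 by rewrite divr_ge0 // sqr_ge0.
set n := Num.Def.archi_bound (32 / r0 ^+ 2).
have hn := archi_boundP q0; rewrite -/n in hn.
apply: (iterate r00 (n := n) Ea Eb Eg) => //.
right; split => //; split => //.
have : 32 <= n%:R * r0 ^+ 2.
  by move: hn; rewrite ltr_pdivrMr ?exprn_gt0 // => /ltW.
rewrite mulrA -/r0; move: r00; clear; lra.
Qed.

End Iter.
Section Principal.
Variables (R : realType) (d : nat) (M : structure R d).
Hypothesis HM : model_of (@PQM R d) M.
Hypothesis d3 : (3 <= d)%N.
Local Notation C := (R[i]).
Local Notation vec := 'cV[C]_d.
Local Notation dot := (@dotv R d).
Local Notation H := (subspace R d).
Local Notation mem := (@mem_sub R d).
Local Notation RC := (real_complex R).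
Local Notation rel := (@i_rel R d M).
Local Notation pi := (@i_pi R d M).
Local Notation uu := (@i_u R d M).
Local Notation bot := (sbot R d).

Lemma rel_top (p : H) (a : M) : (forall v, mem p v) -> rel p a.
Proof. by move=> h; apply: (Ale HM) (Atop HM a) => v _; apply: h. Qed.

Lemma hyp_scale (x : vec) (c : C) (a : M) : rel (hyp x) a -> rel (hyp (c *: x)) a.
Proof.
apply: (Ale HM) => w; rewrite /mem_sub /= => h.
by rewrite dotZr h mulr0.
Qed.

Lemma sas_hyp (x y : vec) : x != 0 ->
  sle (sasaki (hyp x) (span2 x y)) (span1 (y - (dot y x / dot x x) *: x)).
Proof.
move=> x0 w [[al [be wE]] [u [h [ou hh wE2]]]].
have ux : dot u x = 0 by apply: ou; exists 1, 0; rewrite scale1r scale0r addr0.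
have hx : dot h x = 0 := hh.
have wx : dot w x = 0 by rewrite wE2 dotDl ux hx addr0.
rewrite wE dotDl !dotZl in wx.
have xx0 : dot x x != 0 by rewrite dot_eq0.
exists be; rewrite wE scalerBr scalerA.
have -> : al = - (be * (dot y x / dot x x)).
  apply: (mulIf xx0); rewrite mulNr -!mulrA mulVf // mulr1.
  by apply/eqP; rewrite -subr_eq0 opprK; apply/eqP.
by rewrite scaleNr addrC.
Qed.

Lemma sasaki_eqq (p q q' : H) : (forall v, mem q v <-> mem q' v) ->
  sle (sasaki p q) (sasaki p q').
Proof.
move=> qq w [qw [u [v [ou pv wE]]]]; split; first by apply/qq.
exists u, v; split => //; apply/memoP => w' /qq; exact: ou.
Qed.

Lemma span2C (x y : vec) v : mem (span2 x y) v <-> mem (span2 y x) v.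
Proof. by split => -[al [be ->]]; exists be, al; rewrite addrC. Qed.

Lemma Zsum (x y : vec) (a : M) : rel (hyp x) a -> rel (hyp y) a -> rel (hyp (x + y)) a.
Proof.
move=> rx ry.
have [->|x0] := eqVneq x 0; first by rewrite add0r.
have [->|y0] := eqVneq y 0; first by rewrite addr0.
set x' := y - (dot y x / dot x x) *: x.
set y' := x - (dot x y / dot y y) *: y.
have [x'0|x'0] := eqVneq x' 0.
  have -> : x + y = (1 + dot y x / dot x x) *: x.
    by have := x'0; rewrite /x' => /eqP; rewrite subr_eq0 => /eqP {1}->; rewrite scalerDl scale1r.
  exact: hyp_scale.
have [y'0|y'0] := eqVneq y' 0.
  have -> : x + y = (1 + dot x y / dot y y) *: y.
    by have := y'0; rewrite /y' => /eqP; rewrite subr_eq0 => /eqP {1}->; rewrite scalerDl scale1r addrC.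
  exact: hyp_scale.
set q := span2 x y.
have r1 : rel (span1 x') (pi q a) := Ale HM (@sas_hyp x y x0) (Api HM q rx).
have r2 : rel (span1 y') (pi q a).
  have := Api HM q ry; apply: (Ale HM) => w hw.
  apply: (@sas_hyp y x y0); apply: (sasaki_eqq (span2C x y)) hw.
have B0 : y' - (dot y' x' / dot x' x') *: x' != 0.
  apply/negP; rewrite subr_eq0 => /eqP e.
  have y'y : dot y' y = 0.
    rewrite /y' dotBl dotZl mulfVK ?subrr // dot_eq0 //.
  have x'x : dot x' x = 0.
    rewrite /x' dotBl dotZl mulfVK ?subrr // dot_eq0 //.
  have x'y : dot x' y = dot x' x'.
    by rewrite {2}/x' dotBr dotZr x'x mulr0 subr0.
  move: y'y; rewrite e dotZl x'y => /eqP.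
  rewrite !mulf_eq0 invr_eq0 !dot_eq0 (negbTE x'0) !orbF => /eqP y'x'.
  by move: y'0; rewrite e y'x' mul0r scale0r eqxx.
have := Apibot HM (R2 HM d3 x'0 B0 r1 r2).
apply: (Ale HM) => v /memoP ov; rewrite /mem_sub /=.
by apply: ov; exists 1, 1; rewrite !scale1r.
Qed.

Lemma Z0_sub (a : M) : is_subspace (fun v => rel (hyp v) a).
Proof.
split; first by apply: rel_top => v; rewrite /mem_sub /= dot0r.
by move=> c u v ru rv; apply: Zsum => //; apply: hyp_scale.
Qed.
Definition Z0 (a : M) : H := exist _ _ (Z0_sub a).
Definition sgen (a : M) : H := sortho (Z0 a).

Lemma rel_hypL (a : M) (L : seq vec) : orthl L -> (forall e, e \in L -> mem (Z0 a) e) ->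
  rel (hypL L) a.
Proof.
elim: L => [|e L IH] /=.
  by move=> _ _; apply: rel_top => v f; rewrite in_nil.
move=> [e0 [eL oL]] hZ.
have := Ameet HM (compat_hyp eL) (IH oL (fun f fL => hZ f (@mem_behead _ (e :: L) f fL))) (hZ e (mem_head _ _)).
by apply: (Ale HM) => v /hypL_cons.
Qed.

Lemma rel_sup (a : M) : rel (sgen a) a.
Proof.
case: (basisP (Z0 a)) => oL SL Sid.
have := rel_hypL oL SL; apply: (Ale HM) => v hv; apply/memoP => w Zw.
rewrite -(Sid w Zw) /projL dot_sumr big1_seq // => e /andP[_ eL].
by rewrite dotZr hv // mulr0.
Qed.

Lemma rel_iff_sup (p : H) (a : M) : rel p a <-> sle (sgen a) p.
Proof.
split; last by move=> h; apply: (Ale HM) h (rel_sup a).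
move=> rp v sv; apply/orthoK; apply/memoP => w /memoP ow.
apply: sv; rewrite /mem_sub /=; apply: (Ale HM) rp => u pu.
by rewrite /mem_sub /= dotC ow // conjC0.
Qed.

End Principal.
Section Can.
Variables (R : realType) (d : nat).
Local Notation C := (R[i]).
Local Notation vec := 'cV[C]_d.
Local Notation dot := (@dotv R d).
Local Notation H := (subspace R d).
Local Notation mem := (@mem_sub R d).

Fixpoint canS (t : term R d) (s : H) : H :=
  match t with
  | TVar _ => s
  | Tu U t => simage (mat_of U) (canS t s)
  | Tpi q t => sasaki (canS t s) q
  end.

Fixpoint canv (t : term R d) (v : vec) : vec :=
  match t with
  | TVar _ => v
  | Tu U t => mat_of U *m canv t v
  | Tpi q t => proj q (canv t v)
  end.

Lemma canv_lin t c u v : canv t (c *: u + v) = c *: canv t u + canv t v.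
Proof.
elim: t => [n|U t IH|q t IH] //=; first by rewrite IH mulmxDr scalemxAr.
by rewrite IH projDZ.
Qed.

Lemma canS_image t s w : mem (canS t s) w <-> exists v, mem s v /\ w = canv t v.
Proof.
elim: t w => [n|U t IH|q t IH] w.
- by split => [sw|[v [sv ->]]] //; exists w.
- split => [[v /IH [v' [sv' ->]] ->]|[v [sv ->]]]; first by exists v'.
  by exists (canv t v) => //; apply/IH; exists v.
- rewrite [canS _ _]/= sasakiP; split => [[v [/IH [v' [sv' ->]] ->]]|[v [sv ->]]]; first by exists v'.
  by exists (canv t v); split => //; apply/IH; exists v.
Qed.

Lemma canS_mono t (s s' : H) : sle s s' -> sle (canS t s) (canS t s').
Proof.
move=> ss' w /canS_image [v [sv ->]]; apply/canS_image; exists v; split => //.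
exact: ss'.
Qed.

Lemma canv_mem t (s : H) v : mem s v -> mem (canS t s) (canv t v).
Proof. by move=> sv; apply/canS_image; exists v. Qed.

Lemma canv0 t : canv t 0 = 0.
Proof.
elim: t => [n|U t IH|q t IH] //=; first by rewrite IH mulmx0.
by rewrite IH -(scale0r 0) projZ !scale0r.
Qed.

Lemma K_sub t (p : H) : is_subspace (fun u => mem p (canv t u)).
Proof.
split; first by rewrite canv0; apply: mem0.
by move=> c u v pu pv; rewrite canv_lin; apply: memDZ.
Qed.
Definition Ksub t p : H := exist _ _ (K_sub t p).

Lemma unitary_inv (U : unitaryT R d) : mat_of U *m invmx (mat_of U) = 1%:M.
Proof.
case: U => /= U /eqP uU.
by apply: mulmxV; case: (mulmx1_unit uU).
Qed.

End Can.

Section Types.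
Variables (R : realType) (d : nat) (M : structure R d).
Hypothesis HM : model_of (@PQM R d) M.
Hypothesis d3 : (3 <= d)%N.
Local Notation C := (R[i]).
Local Notation vec := 'cV[C]_d.
Local Notation dot := (@dotv R d).
Local Notation H := (subspace R d).
Local Notation mem := (@mem_sub R d).
Local Notation rel := (@i_rel R d M).
Local Notation pi := (@i_pi R d M).
Local Notation uu := (@i_u R d M).
Local Notation bot := (sbot R d).
Local Notation sgen := (sgen HM d3).

Definition evalT (a : M) (t : term R d) : M := eval (fun _ => a) t.

Lemma hyp_pi (q : H) (u : vec) (b : M) : mem q u -> rel (hyp u) (pi q b) -> rel (hyp u) b.
Proof.
move=> qu ru.
have h1 : rel bot (pi (span1 u) (pi q b)).
  have := Api HM (span1 u) ru; apply: (Ale HM) => w [[c wE] [o [h [oo hh wE2]]]].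
  have : dot w u = 0.
    rewrite wE2 dotDl hh addr0; apply: oo; exists 1; by rewrite scale1r.
  rewrite wE dotZl => /eqP; rewrite mulf_eq0 dot_eq0 => /orP [/eqP->|/eqP->];
  by rewrite /mem_sub /= ?scale0r ?scaler0.
have su : sle (span1 u) q by move=> w [c ->]; apply: memZ.
have h2 := Apibot HM (Apic HM su h1).
apply: (Ale HM) h2 => w ow; apply: ow; exists 1; by rewrite scale1r.
Qed.

Lemma sup_le_q (q : H) (b : M) : sle (sgen (pi q b)) q.
Proof.
apply/(rel_iff_sup HM d3); have := Api HM q (Atop HM b).
by apply: (Ale HM); apply: sasaki_le.
Qed.

Lemma typeE (a : M) t p : rel p (evalT a t) <-> sle (canS t (sgen a)) p.
Proof.
elim: t p => [n|U t IH|q t IH] p.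
- exact: rel_iff_sup.
- rewrite /evalT /= -/(evalT a t); split.
    move=> /(Aue HM) /IH h w [v /h [v' pv' ->] ->].
    by rewrite mulmxA unitary_inv mul1mx.
  move=> h; apply: (Ale HM) h _; apply: (Aui HM); apply/IH; exact: sle_refl.
- rewrite /evalT /= -/(evalT a t); split; last first.
    move=> h; apply: (Ale HM) h _; apply: (Api HM); apply/IH; exact: sle_refl.
  move=> /(rel_iff_sup HM d3) h; apply: sle_trans h => w /sasakiP [v [cv ->]].
  apply/memoP => z /= rz.
  set b := evalT a t in rz *.
  have oq : forall x, mem (sortho q) x -> rel (hyp x) (pi q b).
    move=> x ox; apply: (Ale HM) (Api HM q (Atop HM b)) => y [qy _].
    by rewrite /mem_sub /= dotC ox // conjC0.
  have ru : rel (hyp (proj q z)) (pi q b).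
    have -> : proj q z = z - (z - proj q z) by rewrite opprB addrC subrK.
    have Z := Z0_sub HM d3 (pi q b).
    have := @memB _ _ (exist _ _ Z) z (z - proj q z) rz (oq _ (@proj_orth R d q z)).
    by [].
  have rb : rel (hyp (proj q z)) b := hyp_pi (proj_mem q z) ru.
  have /IH h := rb.
  rewrite dot_proj dotC -dot_proj -dotC.
  exact: h.
Qed.

End Types.
Section Lines.
Variables (R : realType) (d : nat).
Local Notation C := (R[i]).
Local Notation vec := 'cV[C]_d.
Local Notation dot := (@dotv R d).
Local Notation H := (subspace R d).
Local Notation mem := (@mem_sub R d).

Definition seqv (p q : H) := sle p q /\ sle q p.

Lemma seqv_trans p q r : seqv p q -> seqv q r -> seqv p r.
Proof. by move=> [pq qp] [qr rq]; split; apply: sle_trans; eauto. Qed.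

Lemma proj_line (x y : vec) : y != 0 -> proj (span1 y) x = (dot x y / dot y y) *: y.
Proof.
move=> y0; apply: proj_unique; first by exists (dot x y / dot y y).
apply/memoP => w [c ->]; rewrite dotZr dotBl dotZl mulfVK ?subrr ?mulr0 //.
by rewrite dot_eq0.
Qed.

Lemma sas_line (x y : vec) : dot x y != 0 -> seqv (sasaki (span1 x) (span1 y)) (span1 y).
Proof.
move=> xy.
have y0 : y != 0 by apply: contraNneq xy => ->; rewrite dot0r.
have yy : dot y y != 0 by rewrite dot_eq0.
split; first by apply: sasaki_le.
move=> w [c ->]; apply/sasakiP; exists ((c / (dot x y / dot y y)) *: x); split.
  by exists (c / (dot x y / dot y y)).
rewrite projZ proj_line // scalerA divfK //.
by rewrite mulf_neq0 // invr_eq0.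
Qed.

Lemma sas_sub_line (S : H) (x : vec) : mem S x -> seqv (sasaki S (span1 x)) (span1 x).
Proof.
move=> Sx; split; first by apply: sasaki_le.
move=> w [c ->]; apply/sasakiP; exists (c *: x); split; first by apply: memZ.
by rewrite proj_id //; exists c.
Qed.

Lemma sasaki_seqv (p p' q : H) : seqv p p' -> seqv (sasaki p q) (sasaki p' q).
Proof. by move=> [h1 h2]; split; apply: sasaki_mono. Qed.

Lemma avoid (S : H) (I : Type) (Ks : seq I) (K : I -> H) (P : I -> Prop) :
  (forall i, List.In i Ks -> P i -> exists u, mem S u /\ ~ mem (K i) u) ->
  exists v, mem S v /\ forall i, List.In i Ks -> P i -> ~ mem (K i) v.
Proof.
elim: Ks => [|i Ks IH] hK; first by exists 0; split => //; apply: mem0.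
have [v1 [Sv1 hv1]] := IH (fun j jK => hK j (or_intror jK)).
case: (classic (P i /\ mem (K i) v1)) => [[Pi Kv1]|nb]; last first.
  exists v1; split => // j [<-|jK] Pj; last exact: hv1.
  by move=> Kj; apply: nb.
have [u [Su Ku]] := hK i (or_introl erefl) Pi.
pose nj (j : I) : nat :=
  match excluded_middle_informative (exists n : nat, mem (K j) (v1 + n%:R *: u)) with
  | left ex => proj1_sig (constructive_indefinite_description _ ex)
  | right _ => 0%N
  end.
have njP : forall j n, mem (K j) (v1 + n%:R *: u) -> mem (K j) (v1 + (nj j)%:R *: u).
  move=> j n Kn; rewrite /nj; case: excluded_middle_informative => [ex|nex].
    exact: (proj2_sig (constructive_indefinite_description _ ex)).
  by case: nex; exists n.
pose N := foldr (fun j acc => maxn (nj j) acc) 0%N Ks.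
have leN : forall j, List.In j Ks -> (nj j <= N)%N.
  rewrite /N; elim: (Ks) => [//|j0 Ks' IH'] j [<-|jK] /=; first by rewrite leq_maxl.
  by rewrite (leq_trans (IH' j jK)) // leq_maxr.
have key : forall (Q : H) n m, n != m -> mem Q (v1 + n%:R *: u) -> mem Q (v1 + m%:R *: u) ->
    mem Q u /\ mem Q v1.
  move=> Q n m nm Qn Qm.
  have nm' : (n%:R - m%:R : C) != 0 by rewrite subr_eq0 eqr_nat.
  have Qu : mem Q u.
    have := memZ (n%:R - m%:R)^-1 (memB Qn Qm).
    have -> : (v1 + n%:R *: u) - (v1 + m%:R *: u) = (n%:R - m%:R) *: u.
      by rewrite opprD addrACA subrr add0r scalerBl.
    by rewrite scalerA mulVf // scale1r.
  split => //; have := memB Qn (memZ n%:R Qu); by rewrite addrK.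
exists (v1 + (N.+1)%:R *: u); split; first by apply: memD => //; apply: memZ.
move=> j [<-|jK] Pj Kj.
  have := key (K i) N.+1 0%N erefl Kj; rewrite scale0r addr0 => /(_ Kv1) [Kui _].
  exact: Ku Kui.
have Kjj := njP j _ Kj.
have [nN|nN] := eqVneq (nj j) N.+1.
  by have := leN j jK; rewrite nN ltnn.
have [_ Kv] := key (K j) _ _ nN Kjj Kj.
exact: (hv1 j jK Pj Kv).
Qed.

End Lines.

Section Realize.
Variables (R : realType) (d : nat) (N : structure R d).
Hypothesis HN : model_of (@PQM R d) N.
Hypothesis d3 : (3 <= d)%N.
Local Notation C := (R[i]).
Local Notation vec := 'cV[C]_d.
Local Notation dot := (@dotv R d).
Local Notation H := (subspace R d).
Local Notation mem := (@mem_sub R d).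
Local Notation rel := (@i_rel R d N).
Local Notation pi := (@i_pi R d N).
Local Notation bot := (sbot R d).
Local Notation sgen := (sgen HN d3).

Lemma sgen_pi (q : H) (b : N) : seqv (sgen (pi q b)) (sasaki (sgen b) q).
Proof.
split.
  apply/(rel_iff_sup HN d3).
  by have := (typeE HN d3 b (Tpi q (TVar R d 0)) (sasaki (sgen b) q)).2 (fun v h => h).
apply/(typeE HN d3 b (Tpi q (TVar R d 0))); exact: rel_sup.
Qed.

Lemma step_line (b : N) (x y : vec) : seqv (sgen b) (span1 x) -> dot x y != 0 ->
  seqv (sgen (pi (span1 y) b)) (span1 y).
Proof.
move=> hb xy; apply: seqv_trans (sgen_pi _ _) _.
exact: seqv_trans (sasaki_seqv _ hb) (sas_line xy).
Qed.

Lemma realize (e0 : N) (v : vec) : exists b : N, seqv (sgen b) (span1 v).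
Proof.
have [e ne] := Anbot HN e0.
have [v0 [Sv0 v00]] : exists v0, mem (sgen e) v0 /\ v0 != 0.
  apply: NNPP => h; apply: ne; apply/(rel_iff_sup HN d3) => w Sw.
  apply/eqP; apply: NNPP => w0; apply: h; exists w; split => //; exact/negP.
have h1 : seqv (sgen (pi (span1 v0) e)) (span1 v0).
  exact: seqv_trans (sgen_pi _ _) (sas_sub_line Sv0).
have [->|v_0] := eqVneq v 0.
  exists (pi (span1 0) e); split.
    by apply: sle_trans (proj1 (sgen_pi _ _)) _; apply: sasaki_le.
  by move=> w [c ->]; rewrite scaler0; apply: mem0.
have [h|h] := eqVneq (dot v0 v) 0; last first.
  by exists (pi (span1 v) (pi (span1 v0) e)); apply: step_line h1 h.
have h2 : dot v0 (v + v0) != 0 by rewrite dotDr h add0r dot_eq0.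
have h3 : dot (v + v0) v != 0.
  by rewrite dotDl [dot v0 v]h addr0 dot_eq0.
exists (pi (span1 v) (pi (span1 (v + v0)) (pi (span1 v0) e))).
exact: step_line (step_line h1 h2) h3.
Qed.

End Realize.

Section Matching.
Variables (R : realType) (d : nat) (M N : structure R d).
Hypothesis HM : model_of (@PQM R d) M.
Hypothesis HN : model_of (@PQM R d) N.
Hypothesis d3 : (3 <= d)%N.
Local Notation C := (R[i]).
Local Notation vec := 'cV[C]_d.
Local Notation H := (subspace R d).
Local Notation mem := (@mem_sub R d).

Lemma matching (e0 : N) (a : M) (L : seq (term R d * H)) :
  exists b : N, forall tp, List.In tp L ->
    (@i_rel R d M tp.2 (evalT a tp.1) <-> @i_rel R d N tp.2 (evalT b tp.1)).
Proof.
set S := sgen HM d3 a.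
have h0 : forall tp : term R d * H, List.In tp L -> ~ sle (canS tp.1 S) tp.2 ->
    exists u, mem S u /\ ~ mem (Ksub tp.1 tp.2) u.
  move=> [t p] _ /= nle.
  have [w [cw nw]] : exists w, mem (canS t S) w /\ ~ mem p w.
    apply: NNPP => h; apply: nle => w cw; apply: NNPP => nw; apply: h; by exists w.
  have [u [Su wE]] := (canS_image t S w).1 cw.
  by exists u; split => //; rewrite /mem_sub /= -wE.
have [v [Sv hv]] := @avoid R d S _ L (fun tp => Ksub tp.1 tp.2)
   (fun tp => ~ sle (canS tp.1 S) tp.2) h0.
have [b [hb1 hb2]] := realize HN d3 e0 v.
exists b => [[t p]] tpL /=.
rewrite (typeE HM d3) (typeE HN d3) -/S.
split=> h.
  refine (sle_trans _ h); refine (sle_trans (@canS_mono R d t _ _ hb1) _).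
  apply: canS_mono => w [c ->]; exact: memZ.
apply: NNPP => nle.
apply: (hv (t, p) tpL nle); rewrite /mem_sub /=.
apply: h; apply: canS_mono hb2 _ _; apply: canv_mem; exists 1; by rewrite scale1r.
Qed.

End Matching.
Section Logic.
Variables (R : realType) (d : nat).
Local Notation H := (subspace R d).
Local Notation term := (term R d).
Local Notation formula := (formula R d).

Fixpoint atoms (f : formula) : seq (term * H) :=
  match f with
  | FRel p t => [:: (t, p)]
  | FFalse => [::]
  | FNot g => atoms g
  | FAnd g h | FOr g h | FImp g h => atoms g ++ atoms h
  | FAll _ g | FEx _ g => atoms g
  end.

Lemma term_var_ex (t : term) : exists n, term_var n t.
Proof. by elim: t => [n|U t IH|q t IH] //=; exists n. Qed.

Lemma eval_var (M : structure R d) (rho : nat -> M) (t : term) n :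
  term_var n t -> eval rho t = evalT (rho n) t.
Proof.
rewrite /evalT; elim: t => [m|U t IH|q t IH] /=; first by move=> ->.
  by move=> /IH ->.
by move=> /IH ->.
Qed.

Variables (M N : structure R d).
Hypothesis MN : forall (a : M) (L : seq (term * H)), exists b : N, forall tp, List.In tp L ->
    (@i_rel R d M tp.2 (evalT a tp.1) <-> @i_rel R d N tp.2 (evalT b tp.1)).
Hypothesis NM : forall (b : N) (L : seq (term * H)), exists a : M, forall tp, List.In tp L ->
    (@i_rel R d M tp.2 (evalT a tp.1) <-> @i_rel R d N tp.2 (evalT b tp.1)).

Definition agree (f : formula) (rho : nat -> M) (sigma : nat -> N) :=
  forall n, free_in n f -> forall t p, List.In (t, p) (atoms f) -> term_var n t ->
    (@i_rel R d M p (eval rho t) <-> @i_rel R d N p (eval sigma t)).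

Lemma agree_l g h rho sigma :
  (forall n, free_in n g -> free_in n h) -> (forall tp, List.In tp (atoms g) -> List.In tp (atoms h)) ->
  agree h rho sigma -> agree g rho sigma.
Proof. by move=> fr atg ag n fn t p tpa tv; apply: (ag n (fr n fn) t p (atg _ tpa) tv). Qed.

Lemma agree_upd m g (rho : nat -> M) (sigma : nat -> N) a b :
  agree (FAll m g) rho sigma ->
  (forall tp, List.In tp (atoms g) ->
     (@i_rel R d M tp.2 (evalT a tp.1) <-> @i_rel R d N tp.2 (evalT b tp.1))) ->
  agree g (upd rho m a) (upd sigma m b).
Proof.
move=> ag ab n fn t p tpa tv.
rewrite !(eval_var _ tv) /upd.
case: eqP => [_|nm]; first exact: (ab (t, p) tpa).
rewrite -!(eval_var _ tv).
by apply: (ag n _ t p tpa tv); split => // mn; apply: nm.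
Qed.

Lemma transfer (f : formula) : forall rho sigma, agree f rho sigma -> (sat rho f <-> sat sigma f).
Proof.
elim: f => [p t| |g IH|g IHg h IHh|g IHg h IHh|g IHg h IHh|m g IH|m g IH] rho sigma ag /=.
- have [n tn] := term_var_ex t.
  by apply: (ag n tn t p) => //=; left.
- by [].
- by rewrite (IH rho sigma ag).
- have hg : agree g rho sigma.
    by apply: agree_l ag => [n|tp] ?; [left|apply: List.in_or_app; left].
  have hh : agree h rho sigma.
    by apply: agree_l ag => [n|tp] ?; [right|apply: List.in_or_app; right].
  by rewrite (IHg _ _ hg) (IHh _ _ hh).
- have hg : agree g rho sigma.
    by apply: agree_l ag => [n|tp] ?; [left|apply: List.in_or_app; left].
  have hh : agree h rho sigma.
    by apply: agree_l ag => [n|tp] ?; [right|apply: List.in_or_app; right].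
  by rewrite (IHg _ _ hg) (IHh _ _ hh).
- have hg : agree g rho sigma.
    by apply: agree_l ag => [n|tp] ?; [left|apply: List.in_or_app; left].
  have hh : agree h rho sigma.
    by apply: agree_l ag => [n|tp] ?; [right|apply: List.in_or_app; right].
  by rewrite (IHg _ _ hg) (IHh _ _ hh).
- split=> hs x.
    have [a ha] := NM x (atoms g).
    by apply/(IH _ _ (agree_upd ag ha)).
  have [b hb] := MN x (atoms g).
  by apply/(IH _ _ (agree_upd ag hb)).
- split=> [[x hx]|[x hx]].
    have [b hb] := MN x (atoms g).
    by exists b; apply/(IH _ _ (agree_upd ag hb)).
  have [a ha] := NM x (atoms g).
  by exists a; apply/(IH _ _ (agree_upd ag ha)).
Qed.

End Logic.
Section VModel.
Variables (R : realType) (d : nat).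
Local Notation C := (R[i]).
Local Notation vec := 'cV[C]_d.
Local Notation H := (subspace R d).
Local Notation mem := (@mem_sub R d).

Definition vmodel : structure R d :=
  @Structure R d vec (fun U v => mat_of U *m v) (fun q v => proj q v) (fun p v => mem p v).

Lemma vmodel_ok : (0 < d)%N -> model_of (@PQM R d) vmodel.
Proof.
move=> d0 f []; rewrite /models /=.
- move=> rho; exists (const_mx 1); rewrite /upd /= /mem_sub /= => /matrixP /(_ (Ordinal d0) 0).
  by rewrite !mxE => /eqP; rewrite oner_eq0.
- by [].
- by move=> p q pq rho a; rewrite /upd /=; apply: pq.
- by move=> p q _ rho a; rewrite /upd /= => -[].
- move=> p q rho a; rewrite /upd /= => pa; apply/sasakiP; by exists a.
- move=> p q pq rho a; rewrite /upd /= /mem_sub /= => h.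
  have -> : a = proj q a + (a - proj q a) by rewrite addrC subrK.
  rewrite projD h add0r; apply: proj_ortho0; apply/memoP => w pw.
  by apply: (@proj_orth R d q a); apply: pq.
- move=> q rho a; rewrite /upd /= /mem_sub /= => h.
  by have := @proj_orth R d q a; rewrite h subr0.
- by move=> p U rho a; rewrite /upd /= => pa; exists a.
- move=> p U rho a; rewrite /upd /= => pa; exists (mat_of U *m a) => //.
  case: U pa => /= U /eqP uU _.
  by rewrite mulmxA mulVmx ?mul1mx //; case: (mulmx1_unit uU).
Qed.

End VModel.

Theorem mainTheorem4 (R : realType) (d : nat) :
  (3 <= d)%N -> complete_theory (@PQM R d).
Proof.
move=> d3; split.
  by exists (vmodel R d); apply: vmodel_ok; apply: leq_trans d3.
move=> s ss.
case: (classic (entails (@PQM R d) s)) => [h|h]; first by left.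
right => N HN sigma /= sN.
apply: h => M HM rho.
have MN := matching HM HN d3 (sigma 0%N).
have NM : forall (b : N) L, exists a : M, forall tp, List.In tp L ->
    (@i_rel R d M tp.2 (evalT a tp.1) <-> @i_rel R d N tp.2 (evalT b tp.1)).
  move=> b L; have [a ha] := matching HN HM d3 (rho 0%N) b L.
  by exists a => tp tpL; rewrite (ha tp tpL).
apply/(transfer MN NM (rho := rho) (sigma := sigma)) => // n fn.
by case: (ss n).
Qed.
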